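(* Let $J$ be the transformation $J:(u,v)(z)\mapsto(-\overline{u(\bar z)},\overline{v(\bar z)})$, which maps solutions of (L) to solutions of (L), and let $J_*f$ denote the image of a vector function $f$. Let $f_{j\pm}$, $j=1,2$, denote the $j$-th column of $W_\pm$. Then $J_*f_{2\pm}=f_{2\mp}$ in general, and $J_*f_{1\pm}=-f_{1\mp}$ whenever $l\in\mathbb Z$.
   Context: Let $\omega>0$, $l\ge0$ real, $\mu>0$. System (L): $u'=z^{-2}\big(-(lz+\mu(1+z^2))u+\frac{z}{2i\omega}v\big)$, $v'=\frac{1}{2i\omega z}u$. $F(z)=\operatorname{diag}(z^{-l}e^{\mu(1/z-z)},1)$. $S_+$ (resp. $S_-$) is a sector with vertex $0$ containing the closed upper (resp. lower) half-plane minus $0$ whose closure avoids $i\mathbb R_-$ (resp. $i\mathbb R_+$), $S_-=\overline{S_+}$. $H_\pm$ are the unique invertible matrix functions holomorphic on $S_\pm$, $C^\infty$ on $\overline{S_\pm}\setminus\{\infty\}$, $H_\pm(0)=\mathrm{Id}$, such that $w=H_\pm\tilde w$ transforms (L) into $\tilde u'=-z^{-2}(lz+\mu(1+z^2))\tilde u$, $\tilde v'=0$. The canonical sectorial fundamental matrices are $W_\pm=H_\pm F$, with the branch of $F$ on $S_-$ obtained by counterclockwise continuation from $S_+$. *)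

(* Defs.v *)
From Stdlib Require Import Reals Lra ZArith.
Open Scope R_scope.

Definition C := (R * R)%type.
Definition RtoC (x : R) : C := (x, 0).
Definition C0 : C := (0, 0).
Definition C1 : C := (1, 0).
Definition Ci : C := (0, 1).
Definition Cadd (z w : C) : C := (fst z + fst w, snd z + snd w).
Definition Copp (z : C) : C := (- fst z, - snd z).
Definition Csub (z w : C) : C := Cadd z (Copp w).
Definition Cmul (z w : C) : C :=
  (fst z * fst w - snd z * snd w, fst z * snd w + snd z * fst w).
Definition Cnorm2 (z : C) : R := fst z * fst z + snd z * snd z.
Definition Cnorm (z : C) : R := sqrt (Cnorm2 z).
Definition Cinv (z : C) : C := (fst z / Cnorm2 z, - snd z / Cnorm2 z).
Definition Cdiv (z w : C) : C := Cmul z (Cinv w).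
Definition Cconj (z : C) : C := (fst z, - snd z).
Definition Cexp (z : C) : C :=
  (exp (fst z) * cos (snd z), exp (fst z) * sin (snd z)).
Definition polar (r theta : R) : C := (r * cos theta, r * sin theta).

Definition in_sector (a b : R) (z : C) : Prop :=
  exists r theta, 0 < r /\ a < theta < b /\ z = polar r theta.
Definition in_sector_cl (a b : R) (z : C) : Prop :=
  exists r theta, 0 <= r /\ a <= theta <= b /\ z = polar r theta.

Definition has_cderiv (f : C -> C) (z d : C) : Prop :=
  forall eps, 0 < eps -> exists delta, 0 < delta /\
    forall h, 0 < Cnorm h < delta ->
      Cnorm (Csub (Cdiv (Csub (f (Cadd z h)) (f z)) h) d) < eps.

Definition holomorphic_on (S : C -> Prop) (f : C -> C) : Prop :=
  forall z, S z -> exists d, has_cderiv f z d.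

Definition continuous_on (P : C -> Prop) (f : C -> C) : Prop :=
  forall z, P z -> forall eps, 0 < eps -> exists delta, 0 < delta /\
    forall w, P w -> Cnorm (Csub w z) < delta -> Cnorm (Csub (f w) (f z)) < eps.

(** C^infty on the closure Sbar of the open sector S (for a function
    holomorphic on S): all derivatives extend continuously to Sbar. *)
Definition smooth_on_closure (S Sbar : C -> Prop) (f : C -> C) : Prop :=
  exists D : nat -> C -> C,
    (forall z, Sbar z -> D O z = f z) /\
    (forall k z, S z -> has_cderiv (D k) z (D (Datatypes.S k) z)) /\
    (forall k, continuous_on Sbar (D k)).

Record MatFun := { m11 : C -> C; m12 : C -> C; m21 : C -> C; m22 : C -> C }.

(** Coefficients of system (L):  w' = A(z) w  with
    A = [[ -(l z + mu (1+z^2))/z^2 , 1/(2 i omega z) ],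
         [ 1/(2 i omega z)          , 0               ]]
    and of the normal form  w~' = B(z) w~,  B = diag(b(z), 0),
    b(z) = -(l z + mu (1+z^2))/z^2. *)
Definition bcoef (l mu : R) (z : C) : C :=
  Copp (Cdiv (Cadd (Cmul (RtoC l) z) (Cmul (RtoC mu) (Cadd C1 (Cmul z z))))
             (Cmul z z)).
Definition ccoef (omega : R) (z : C) : C :=
  Cinv (Cmul (Cmul (RtoC 2) (Cmul Ci (RtoC omega))) z).

(** w = H w~ transforms (L) into the normal form iff H' = A H - H B. *)
Definition gauge_eq (omega l mu : R) (S : C -> Prop) (H : MatFun) : Prop :=
  forall z, S z ->
    has_cderiv (m11 H) z
      (Csub (Cadd (Cmul (bcoef l mu z) (m11 H z)) (Cmul (ccoef omega z) (m21 H z)))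
            (Cmul (m11 H z) (bcoef l mu z))) /\
    has_cderiv (m12 H) z
      (Cadd (Cmul (bcoef l mu z) (m12 H z)) (Cmul (ccoef omega z) (m22 H z))) /\
    has_cderiv (m21 H) z
      (Csub (Cmul (ccoef omega z) (m11 H z)) (Cmul (m21 H z) (bcoef l mu z))) /\
    has_cderiv (m22 H) z (Cmul (ccoef omega z) (m12 H z)).

Definition is_normalizing_H (omega l mu : R) (S Sbar : C -> Prop) (H : MatFun)
  : Prop :=
  (forall z, S z ->
     Csub (Cmul (m11 H z) (m22 H z)) (Cmul (m12 H z) (m21 H z)) <> C0) /\
  holomorphic_on S (m11 H) /\ holomorphic_on S (m12 H) /\
  holomorphic_on S (m21 H) /\ holomorphic_on S (m22 H) /\
  smooth_on_closure S Sbar (m11 H) /\ smooth_on_closure S Sbar (m12 H) /\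
  smooth_on_closure S Sbar (m21 H) /\ smooth_on_closure S Sbar (m22 H) /\
  m11 H C0 = C1 /\ m12 H C0 = C0 /\ m21 H C0 = C0 /\ m22 H C0 = C1 /\
  gauge_eq omega l mu S H.

(** (1,1) entry of F at z = r e^{i theta}, using the branch of log with
    log z = ln r + i theta:  z^{-l} e^{mu (1/z - z)}. *)
Definition Fentry (l mu r theta : R) : C :=
  let z := polar r theta in
  Cmul (Cexp (Cmul (RtoC (- l)) (ln r, theta)))
       (Cexp (Cmul (RtoC mu) (Csub (Cinv z) z))).

(** first column of W = H F at z = r e^{i theta} (theta = chosen branch arg) *)
Definition col1W (H : MatFun) (l mu r theta : R) : C * C :=
  let z := polar r theta in
  (Cmul (m11 H z) (Fentry l mu r theta), Cmul (m21 H z) (Fentry l mu r theta)).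

(** second column of W = H F (F's second column is (0,1)) *)
Definition col2W (H : MatFun) (z : C) : C * C := (m12 H z, m22 H z).

(** J acting on a value: J_* f (z) = Jval (f (conj z)) *)
Definition Jval (p : C * C) : C * C := (Copp (Cconj (fst p)), Cconj (snd p)).
Definition vopp (p : C * C) : C * C := (Copp (fst p), Copp (snd p)).

(* Main.v *)
Require Import Defs.
From Stdlib Require Import Reals ZArith Lra Lia Psatz FunctionalExtensionality.
From Coquelicot Require Complex.
From Coquelicot Require Coquelicot.
Open Scope R_scope.
Notation C := Defs.C.

Definition CD (f : R -> Defs.C) (t : R) (d : Defs.C) : Prop :=
  derivable_pt_lim (fun s => fst (f s)) t (fst d) /\
  derivable_pt_lim (fun s => snd (f s)) t (snd d).

Lemma dpl_val f t l l' : derivable_pt_lim f t l -> l = l' -> derivable_pt_lim f t l'.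
Proof. intros H ->; exact H. Qed.

Lemma CD_val f t d d' : CD f t d -> d = d' -> CD f t d'.
Proof. intros H ->; exact H. Qed.

Lemma CD_ext f g t d : (forall s, f s = g s) -> CD f t d -> CD g t d.
Proof. intros E H. replace g with f; auto. apply functional_extensionality; auto. Qed.

Lemma CD_mul f g t df dg : CD f t df -> CD g t dg ->
  CD (fun s => Cmul (f s) (g s)) t (Cadd (Cmul df (g t)) (Cmul (f t) dg)).
Proof.
  intros [f1 f2] [g1 g2]; split; simpl.
  - eapply dpl_val.
    + apply (derivable_pt_lim_minus (fun s => fst (f s) * fst (g s)) (fun s => snd (f s) * snd (g s))).
      * apply (derivable_pt_lim_mult (fun s => fst (f s)) (fun s => fst (g s))); eauto.
      * apply (derivable_pt_lim_mult (fun s => snd (f s)) (fun s => snd (g s))); eauto.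
    + simpl; ring.
  - eapply dpl_val.
    + apply (derivable_pt_lim_plus (fun s => fst (f s) * snd (g s)) (fun s => snd (f s) * fst (g s))).
      * apply (derivable_pt_lim_mult (fun s => fst (f s)) (fun s => snd (g s))); eauto.
      * apply (derivable_pt_lim_mult (fun s => snd (f s)) (fun s => fst (g s))); eauto.
    + simpl; ring.
Qed.

Lemma CD_add f g t df dg : CD f t df -> CD g t dg ->
  CD (fun s => Cadd (f s) (g s)) t (Cadd df dg).
Proof.
  intros [f1 f2] [g1 g2]; split; simpl.
  - apply (derivable_pt_lim_plus (fun s => fst (f s)) (fun s => fst (g s))); eauto.
  - apply (derivable_pt_lim_plus (fun s => snd (f s)) (fun s => snd (g s))); eauto.
Qed.

Lemma CD_opp f t df : CD f t df -> CD (fun s => Copp (f s)) t (Copp df).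
Proof.
  intros [f1 f2]; split; simpl.
  - apply (derivable_pt_lim_opp (fun s => fst (f s))); eauto.
  - apply (derivable_pt_lim_opp (fun s => snd (f s))); eauto.
Qed.

Lemma CD_sub f g t df dg : CD f t df -> CD g t dg ->
  CD (fun s => Csub (f s) (g s)) t (Csub df dg).
Proof. intros; unfold Csub; apply CD_add; auto; apply CD_opp; auto. Qed.

Lemma CD_exp (w1 w2 : R -> R) t d1 d2 :
  derivable_pt_lim w1 t d1 -> derivable_pt_lim w2 t d2 ->
  CD (fun s => Cexp (w1 s, w2 s)) t (Cmul (d1, d2) (Cexp (w1 t, w2 t))).
Proof.
  intros H1 H2; split; simpl.
  - eapply dpl_val.
    + apply (derivable_pt_lim_mult (fun s => exp (w1 s)) (fun s => cos (w2 s))).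
      * apply (derivable_pt_lim_comp w1 exp); [exact H1 | apply derivable_pt_lim_exp].
      * apply (derivable_pt_lim_comp w2 cos); [exact H2 | apply derivable_pt_lim_cos].
    + simpl; ring.
  - eapply dpl_val.
    + apply (derivable_pt_lim_mult (fun s => exp (w1 s)) (fun s => sin (w2 s))).
      * apply (derivable_pt_lim_comp w1 exp); [exact H1 | apply derivable_pt_lim_exp].
      * apply (derivable_pt_lim_comp w2 sin); [exact H2 | apply derivable_pt_lim_sin].
    + simpl; ring.
Qed.

Lemma const_open (f : R -> R) p q :
  (forall x, p < x < q -> derivable_pt_lim f x 0) ->
  forall x y, p < x < q -> p < y < q -> f x = f y.
Proof.
  intros H.
  assert (K : forall x y, p < x < q -> p < y < q -> x <= y -> f x = f y).
  { intros x y Hx Hy Hxy.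
    assert (pr : forall z, x < z < y -> derivable_pt f z).
    { intros z Hz. exists 0. apply H; lra. }
    pose proof (null_derivative_loc f x y pr) as N.
    assert (C : constant_D_eq f (fun z => x <= z <= y) (f x)).
    { apply N.
      - intros z Hz. apply derivable_continuous_pt. exists 0. apply H; lra.
      - intros z P. apply derive_pt_eq_0. apply H; lra. }
    symmetry; apply C; lra. }
  intros x y Hx Hy. destruct (Rle_dec x y).
  - apply K; eauto.
  - symmetry; apply K; auto; lra.
Qed.

Lemma CD_const_open (f : R -> Defs.C) p q :
  (forall x, p < x < q -> CD f x C0) ->
  forall x y, p < x < q -> p < y < q -> f x = f y.
Proof.
  intros H x y Hx Hy.
  rewrite (surjective_pairing (f x)), (surjective_pairing (f y)).
  f_equal.
  - apply (const_open (fun s => fst (f s)) p q); auto. intros z Hz; apply H; eauto.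
  - apply (const_open (fun s => snd (f s)) p q); auto. intros z Hz; apply H; eauto.
Qed.

Lemma Cnorm_Cmod (u : C) : Cnorm u = Complex.Cmod u.
Proof. unfold Cnorm, Cnorm2, Complex.Cmod. f_equal. ring. Qed.
Lemma Cnorm_ge0 u : 0 <= Cnorm u.
Proof. rewrite Cnorm_Cmod; apply Complex.Cmod_ge_0. Qed.
Lemma Cnorm_mul u w : Cnorm (Cmul u w) = Cnorm u * Cnorm w.
Proof. rewrite !Cnorm_Cmod; apply Complex.Cmod_mult. Qed.
Lemma Cnorm_add u w : Cnorm (Cadd u w) <= Cnorm u + Cnorm w.
Proof. rewrite !Cnorm_Cmod; apply Complex.Cmod_triangle. Qed.
Lemma Cnorm_fst u : Rabs (fst u) <= Cnorm u.
Proof. rewrite Cnorm_Cmod. pose proof (Complex.Rmax_Cmod u). pose proof (Rmax_l (Rabs (fst u)) (Rabs (snd u))). lra. Qed.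
Lemma Cnorm_snd u : Rabs (snd u) <= Cnorm u.
Proof. rewrite Cnorm_Cmod. pose proof (Complex.Rmax_Cmod u). pose proof (Rmax_r (Rabs (fst u)) (Rabs (snd u))). lra. Qed.
Lemma Cnorm_le_sum u : Cnorm u <= Rabs (fst u) + Rabs (snd u).
Proof.
  destruct u as [x y]. unfold Cnorm, Cnorm2; simpl.
  rewrite <- (sqrt_Rsqr (Rabs x + Rabs y)) by (pose proof (Rabs_pos x); pose proof (Rabs_pos y); lra).
  apply sqrt_le_1_alt. unfold Rsqr.
  pose proof (Rabs_pos x); pose proof (Rabs_pos y).
  assert (A : Rabs x * Rabs x = x * x) by (rewrite <- Rabs_mult; apply Rabs_right; nra).
  assert (B : Rabs y * Rabs y = y * y) by (rewrite <- Rabs_mult; apply Rabs_right; nra).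
  nra.
Qed.
Lemma Cnorm_zero u : Cnorm u = 0 -> u = C0.
Proof.
  destruct u as [x y]; unfold Cnorm, Cnorm2; simpl. intros H.
  apply sqrt_eq_0 in H; [|nra]. unfold C0. f_equal; nra.
Qed.
Lemma Cnorm_opp u : Cnorm (Copp u) = Cnorm u.
Proof. destruct u; unfold Cnorm, Cnorm2; simpl; f_equal; ring. Qed.

Lemma cderiv_o f z d : has_cderiv f z d ->
  forall eps, 0 < eps -> exists delta, 0 < delta /\ forall h, Cnorm h < delta ->
   Cnorm (Csub (Csub (f (Cadd z h)) (f z)) (Cmul d h)) <= eps * Cnorm h.
Proof.
  intros H eps Heps. destruct (H eps Heps) as [delta [Hd Hh]].
  exists delta; split; auto. intros h Hlt.
  destruct (Req_dec (Cnorm h) 0) as [E|E].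
  - apply Cnorm_zero in E; subst h. unfold Cadd, C0; simpl. rewrite !Rplus_0_r.
    destruct z as [z1 z2]; simpl. rewrite E0 || idtac.
    replace (Csub (Csub (f (z1, z2)) (f (z1, z2))) (Cmul d (0, 0))) with C0.
    + unfold Cnorm, Cnorm2, C0; simpl. rewrite Rmult_0_l, Rplus_0_l, sqrt_0. unfold Cnorm, Cnorm2; simpl. nra.
    + unfold Csub, Cadd, Copp, Cmul, C0; simpl; f_equal; ring.
  - assert (Hp : 0 < Cnorm h) by (pose proof (Cnorm_ge0 h); lra).
    specialize (Hh h (conj Hp Hlt)).
    set (X := Csub (f (Cadd z h)) (f z)) in *.
    assert (Eq : Csub X (Cmul d h) = Cmul (Csub (Cdiv X h) d) h).
    { assert (N : Cnorm2 h <> 0).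
      { intro N. apply E. unfold Cnorm. rewrite N. apply sqrt_0. }
      destruct X as [x1 x2], h as [h1 h2], d as [d1 d2].
      unfold Cnorm2 in N; simpl in N.
      unfold Csub, Cadd, Copp, Cmul, Cdiv, Cinv, Cnorm2; simpl. f_equal; field; auto. }
    rewrite Eq, Cnorm_mul. apply Rmult_le_compat_r; lra.
Qed.

Lemma Cnorm_real s : Cnorm (s, 0) = Rabs s.
Proof. unfold Cnorm, Cnorm2; simpl. rewrite Rmult_0_l, Rplus_0_r. apply sqrt_Rsqr_abs. Qed.

Lemma dpl_o (g : R -> R) t l : derivable_pt_lim g t l ->
  forall eps, 0 < eps -> exists delta, 0 < delta /\ forall s, Rabs s < delta ->
    Rabs (g (t + s) - g t - l * s) <= eps * Rabs s.
Proof.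
  intros H eps He. destruct (H eps He) as [[delta Hd] Hh]. simpl in Hh.
  exists delta; split; auto. intros s Hs.
  destruct (Req_dec s 0) as [->|Hs0].
  - rewrite Rplus_0_r. replace (g t - g t - l * 0) with 0 by ring. rewrite Rabs_R0; pose proof (Rabs_pos 0); lra.
  - specialize (Hh s Hs0 Hs).
    replace (g (t + s) - g t - l * s) with (((g (t + s) - g t) / s - l) * s) by (field; auto).
    rewrite Rabs_mult. apply Rmult_le_compat_r; [apply Rabs_pos | lra].
Qed.

Lemma CD_o (g : R -> C) t v : CD g t v ->
  forall eps, 0 < eps -> exists delta, 0 < delta /\ forall s, Rabs s < delta ->
    Cnorm (Csub (Csub (g (t + s)) (g t)) (Cmul v (s, 0))) <= eps * Rabs s.
Proof.
  intros [H1 H2] eps He.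
  destruct (dpl_o _ _ _ H1 (eps/2)) as [d1 [Hd1 K1]]; [lra|].
  destruct (dpl_o _ _ _ H2 (eps/2)) as [d2 [Hd2 K2]]; [lra|].
  exists (Rmin d1 d2); split; [apply Rmin_glb_lt; auto|]. intros s Hs.
  assert (s1 : Rabs s < d1) by (pose proof (Rmin_l d1 d2); lra).
  assert (s2 : Rabs s < d2) by (pose proof (Rmin_r d1 d2); lra).
  specialize (K1 s s1); specialize (K2 s s2).
  eapply Rle_trans; [apply Cnorm_le_sum|]. simpl.
  replace (fst (g (t + s)) + - fst (g t) + - (fst v * s - snd v * 0))
    with (fst (g (t + s)) - fst (g t) - fst v * s) by ring.
  replace (snd (g (t + s)) + - snd (g t) + - (fst v * 0 + snd v * s))
    with (snd (g (t + s)) - snd (g t) - snd v * s) by ring.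
  lra.
Qed.

Lemma alg1 (A B dd hh vv : C) s : Csub (Csub A B) (Cmul (Cmul dd vv) (s,0)) = Cadd (Csub (Csub A B) (Cmul dd hh)) (Cmul dd (Csub hh (Cmul vv (s,0)))).
Proof. destruct A, B, dd, hh, vv; cbv [Csub Cadd Copp Cmul]; simpl; f_equal; ring. Qed.

Lemma alg2 (hh vv : C) s : hh = Cadd (Cmul vv (s,0)) (Csub hh (Cmul vv (s,0))).
Proof. destruct hh, vv; cbv [Csub Cadd Copp Cmul]; simpl; f_equal; ring. Qed.

Lemma chain_rule f (g : R -> C) t v d : CD g t v -> has_cderiv f (g t) d ->
  CD (fun s => f (g s)) t (Cmul d v).
Proof.
  intros Hg Hf.
  assert (O : forall eps, 0 < eps -> exists delta, 0 < delta /\ forall s, Rabs s < delta ->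
    Cnorm (Csub (Csub (f (g (t + s))) (f (g t))) (Cmul (Cmul d v) (s, 0))) <= eps * Rabs s).
  { intros eps He.
    set (M := Cnorm v + 1). set (Nd := Cnorm d + 1).
    assert (HM : 0 < M) by (pose proof (Cnorm_ge0 v); unfold M; lra).
    assert (HN : 0 < Nd) by (pose proof (Cnorm_ge0 d); unfold Nd; lra).
    destruct (cderiv_o f (g t) d Hf (eps / (2 * M))) as [d1 [Hd1 K1]].
    { apply Rdiv_lt_0_compat; lra. }
    destruct (CD_o g t v Hg (Rmin 1 (eps / (2 * Nd)))) as [d2 [Hd2 K2]].
    { apply Rmin_glb_lt; [lra| apply Rdiv_lt_0_compat; lra]. }
    exists (Rmin d2 (d1 / M)); split.
    { apply Rmin_glb_lt; auto. apply Rdiv_lt_0_compat; lra. }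
    intros s Hs.
    assert (s2 : Rabs s < d2) by (pose proof (Rmin_l d2 (d1 / M)); lra).
    assert (s1 : Rabs s < d1 / M) by (pose proof (Rmin_r d2 (d1 / M)); lra).
    specialize (K2 s s2).
    set (z := g t) in *. set (w := g (t + s)) in *.
    set (h := Csub w z). set (E := Csub h (Cmul v (s, 0))).
    assert (Ew : w = Cadd z h).
    { unfold h. destruct w, z; cbv [Csub Cadd Copp]; simpl; f_equal; ring. }
    assert (Hh : Cnorm h <= M * Rabs s).
    { replace h with (Cadd (Cmul v (s, 0)) E)
        by (unfold E; symmetry; apply alg2).
      eapply Rle_trans; [apply Cnorm_add|]. rewrite Cnorm_mul, Cnorm_real.
      assert (Cnorm E <= Rabs s).
      { unfold E, h. eapply Rle_trans; [exact K2|].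
        pose proof (Rmin_l 1 (eps / (2 * Nd))). pose proof (Rabs_pos s). nra. }
      unfold M; lra. }
    assert (Hh1 : Cnorm h < d1).
    { pose proof (Rabs_pos s).
      apply Rle_lt_trans with (M * Rabs s); auto.
      apply (Rmult_lt_compat_l M) in s1; auto. field_simplify in s1; lra. }
    specialize (K1 h Hh1). rewrite <- Ew in K1.
    replace (Csub (Csub (f w) (f z)) (Cmul (Cmul d v) (s, 0)))
      with (Cadd (Csub (Csub (f w) (f z)) (Cmul d h)) (Cmul d E))
      by (unfold E; symmetry; apply alg1).
    eapply Rle_trans; [apply Cnorm_add|]. rewrite Cnorm_mul.
    assert (A : eps / (2 * M) * Cnorm h <= eps / 2 * Rabs s).
    { apply Rle_trans with (eps / (2 * M) * (M * Rabs s)).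
      - apply Rmult_le_compat_l; auto. apply Rlt_le, Rdiv_lt_0_compat; lra.
      - right; field; lra. }
    assert (B : Cnorm d * Cnorm E <= eps / 2 * Rabs s).
    { assert (KE : Cnorm E <= eps / (2 * Nd) * Rabs s).
      { unfold E, h. eapply Rle_trans; [exact K2|].
        pose proof (Rmin_r 1 (eps / (2 * Nd))). pose proof (Rabs_pos s). nra. }
      apply Rle_trans with (Cnorm d * (eps / (2 * Nd) * Rabs s)).
      - apply Rmult_le_compat_l; auto. apply Cnorm_ge0.
      - pose proof (Rabs_pos s). pose proof (Cnorm_ge0 d).
        apply Rle_trans with (Nd * (eps / (2 * Nd) * Rabs s)).
        + apply Rmult_le_compat_r; [|unfold Nd; lra].
          apply Rmult_le_pos; auto. apply Rlt_le, Rdiv_lt_0_compat; lra.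
        + right; field; lra. }
    lra. }
  split.
  - intros eps He. destruct (O (eps / 2)) as [delta [Hd K]]; [lra|].
    exists (mkposreal delta Hd). intros s Hs0 Hs. simpl in Hs. specialize (K s Hs).
    set (X := Csub (Csub (f (g (t + s))) (f (g t))) (Cmul (Cmul d v) (s, 0))) in *.
    pose proof (Cnorm_fst X) as F.
    replace ((fst (f (g (t + s))) - fst (f (g t))) / s - fst (Cmul d v)) with (fst X / s)
      by (unfold X; cbv [Csub Cadd Copp Cmul fst snd]; field; auto).
    unfold Rdiv. rewrite Rabs_mult, Rabs_inv.
    assert (Hsp : 0 < Rabs s) by (apply Rabs_pos_lt; auto).
    apply Rle_lt_trans with (eps / 2 * Rabs s * / Rabs s).
    + apply Rmult_le_compat_r; [apply Rlt_le, Rinv_0_lt_compat; auto|]. lra.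
    + field_simplify; lra.
  - intros eps He. destruct (O (eps / 2)) as [delta [Hd K]]; [lra|].
    exists (mkposreal delta Hd). intros s Hs0 Hs. simpl in Hs. specialize (K s Hs).
    set (X := Csub (Csub (f (g (t + s))) (f (g t))) (Cmul (Cmul d v) (s, 0))) in *.
    pose proof (Cnorm_snd X) as F.
    replace ((snd (f (g (t + s))) - snd (f (g t))) / s - snd (Cmul d v)) with (snd X / s)
      by (unfold X; cbv [Csub Cadd Copp Cmul fst snd]; field; auto).
    unfold Rdiv. rewrite Rabs_mult, Rabs_inv.
    assert (Hsp : 0 < Rabs s) by (apply Rabs_pos_lt; auto).
    apply Rle_lt_trans with (eps / 2 * Rabs s * / Rabs s).
    + apply Rmult_le_compat_r; [apply Rlt_le, Rinv_0_lt_compat; auto|]. lra.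
    + field_simplify; lra.
Qed.

Ltac csimpl := cbv [Csub Cadd Copp Cmul Cdiv Cinv Cnorm2 RtoC Defs.C0 Defs.C1 Ci fst snd].

Lemma bcoef_inv l mu z : z <> C0 ->
  bcoef l mu z = Copp (Cadd (Cmul (RtoC l) (Cinv z)) (Cadd (Cmul (RtoC mu) (Cmul (Cinv z) (Cinv z))) (RtoC mu))).
Proof.
  intros Hz. destruct z as [x y].
  assert (N : x * x + y * y <> 0).
  { intro N. apply Hz. unfold C0. f_equal; nra. }
  unfold bcoef. csimpl.
  assert (N2 : (x * x - y * y) * (x * x - y * y) + (x * y + y * x) * (x * y + y * x) <> 0).
  { replace ((x * x - y * y) * (x * x - y * y) + (x * y + y * x) * (x * y + y * x))
      with ((x * x + y * y) * (x * x + y * y)) by ring. apply Rmult_integral_contrapositive; auto. }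
  f_equal; field; auto.
Qed.

Lemma polar_ne0 r th : 0 < r -> polar r th <> C0.
Proof.
  intros Hr E. unfold polar, C0 in E. injection E as E1 E2.
  pose proof (sin2_cos2 th). unfold Rsqr in *.
  assert (cos th = 0) by (apply Rmult_integral in E1; destruct E1; [lra|auto]).
  assert (sin th = 0) by (apply Rmult_integral in E2; destruct E2; [lra|auto]).
  nra.
Qed.

Lemma Cinv_polar r th : 0 < r -> Cinv (polar r th) = (cos th / r, - sin th / r).
Proof.
  intros Hr. unfold Cinv, Cnorm2, polar; simpl.
  pose proof (sin2_cos2 th). unfold Rsqr in *.
  replace (r * cos th * (r * cos th) + r * sin th * (r * sin th)) with (r * r) by nra.
  f_equal; field; lra.
Qed.

Definition Wd (l mu r th : R) : C :=
  (mu * sin th / r - mu * r * sin th, l + mu * cos th / r + mu * r * cos th).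
Definition W1 (mu r th : R) : R := mu * cos th * (r - / r).
Definition W2 (l mu r th : R) : R := l * th + mu * sin th * (r + / r).

Lemma barc l mu r th : 0 < r ->
  Cadd (Cmul (bcoef l mu (polar r th)) (- r * sin th, r * cos th)) (Wd l mu r th) = C0.
Proof.
  intros Hr. rewrite bcoef_inv by (apply polar_ne0; auto).
  rewrite Cinv_polar by auto. unfold Wd. csimpl.
  pose proof (sin2_cos2 th). unfold Rsqr in *.
  assert (Hc : cos th ^ 2 = 1 - sin th ^ 2) by nra.
  assert (Hs : sin th ^ 2 = 1 - cos th ^ 2) by nra.
  f_equal; field_simplify; try lra.
  - rewrite Hc. field; lra.
  - rewrite Hs. field; lra.
Qed.

Module L4.
Import Coquelicot.Coquelicot.

Lemma dpl_of (f : R -> R) x l : is_derive f x l -> derivable_pt_lim f x l.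
Proof. apply is_derive_Reals. Qed.

Lemma CD_ray th t : CD (fun s => polar s th) t (cos th, sin th).
Proof.
  split; simpl; apply dpl_of; auto_derive; auto; ring.
Qed.

Lemma CD_arc r th : CD (fun s => polar r s) th (- r * sin th, r * cos th).
Proof.
  split; simpl; apply dpl_of; auto_derive; auto; ring.
Qed.

Lemma dW1 mu r th : 0 < r -> derivable_pt_lim (W1 mu r) th (fst (Wd 0 mu r th)).
Proof. intros Hr. unfold W1, Wd; simpl. apply dpl_of. auto_derive; auto. field. lra. Qed.

Lemma dW2 l mu r th : 0 < r -> derivable_pt_lim (W2 l mu r) th (snd (Wd l mu r th)).
Proof. intros Hr. unfold W2, Wd; simpl. apply dpl_of. auto_derive; auto. field. lra. Qed.

Lemma bray0 l mu t : 0 < t ->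
  Cadd (Cmul (bcoef l mu (polar t 0)) (cos 0, sin 0)) (l / t + mu / (t * t) + mu, 0) = C0.
Proof.
  intros Ht. rewrite bcoef_inv by (apply polar_ne0; auto).
  rewrite Cinv_polar by auto. rewrite cos_0, sin_0. csimpl. f_equal; field; lra.
Qed.

Lemma braypi l mu t thp : 0 < t -> cos thp = -1 -> sin thp = 0 ->
  Csub (Cmul (bcoef l mu (polar t thp)) (cos thp, sin thp)) (- l / t + mu / (t * t) + mu, 0) = C0.
Proof.
  intros Ht Hc Hs. rewrite bcoef_inv by (apply polar_ne0; auto).
  rewrite Cinv_polar by auto. rewrite Hc, Hs. csimpl. f_equal; field; lra.
Qed.

Definition w0 l mu t := l * ln t - mu / t + mu * t.
Definition wpi l mu t := - l * ln t - mu / t + mu * t.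

Lemma dw0 l mu t : 0 < t -> derivable_pt_lim (w0 l mu) t (l / t + mu / (t * t) + mu).
Proof. intros Ht. unfold w0. apply dpl_of. auto_derive; [lra|field; lra]. Qed.
Lemma dwpi l mu t : 0 < t -> derivable_pt_lim (wpi l mu) t (- l / t + mu / (t * t) + mu).
Proof. intros Ht. unfold wpi. apply dpl_of. auto_derive; [lra|field; lra]. Qed.
Lemma dconst0 t : derivable_pt_lim (fun _ => 0) t 0.
Proof. apply dpl_of. auto_derive; auto. Qed.

End L4.
Import L4.

Definition Dpos (t : R) : Prop := 0 < t.
Definition RL (f : R -> C) (L : C) : Prop :=
  limit1_in (fun t => fst (f t)) Dpos (fst L) 0 /\
  limit1_in (fun t => snd (f t)) Dpos (snd L) 0.

Lemma RL_mul f g L M : RL f L -> RL g M -> RL (fun t => Cmul (f t) (g t)) (Cmul L M).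
Proof.
  intros [f1 f2] [g1 g2]; split; simpl.
  - apply (limit_minus (fun t => fst (f t) * fst (g t)) (fun t => snd (f t) * snd (g t)));
    apply (limit_mul (fun t => _ (f t)) (fun t => _ (g t))); auto.
  - apply (limit_plus (fun t => fst (f t) * snd (g t)) (fun t => snd (f t) * fst (g t)));
    apply (limit_mul (fun t => _ (f t)) (fun t => _ (g t))); auto.
Qed.

Lemma RL_sub f g L M : RL f L -> RL g M -> RL (fun t => Csub (f t) (g t)) (Csub L M).
Proof.
  intros [f1 f2] [g1 g2]; split; simpl.
  - apply (limit_minus (fun t => fst (f t)) (fun t => fst (g t))); auto.
  - apply (limit_minus (fun t => snd (f t)) (fun t => snd (g t))); auto.
Qed.

Lemma RL_opp f L : RL f L -> RL (fun t => Copp (f t)) (Copp L).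
Proof.
  intros [f1 f2]; split; simpl.
  - apply (limit_Ropp (fun t => fst (f t))); auto.
  - apply (limit_Ropp (fun t => snd (f t))); auto.
Qed.

Lemma RL_conj f L : RL f L -> RL (fun t => Cconj (f t)) (Cconj L).
Proof.
  intros [f1 f2]; split; simpl; auto.
  apply (limit_Ropp (fun t => snd (f t))); auto.
Qed.

Lemma adh_pos : adhDa Dpos 0.
Proof.
  intros al Hal. exists (al / 2). split; unfold Dpos; [lra|].
  unfold R_dist. rewrite Rminus_0_r, Rabs_right; lra.
Qed.

Lemma lim_const_on (f : R -> R) K : (forall t, 0 < t -> f t = K) -> limit1_in f Dpos K 0.
Proof.
  intros H eps He. exists 1. split; [lra|]. intros x [Hx _]. simpl. unfold R_dist.
  rewrite H by auto. rewrite Rminus_diag, Rabs_R0; auto.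
Qed.

Lemma RL_unique f K L : (forall t, 0 < t -> f t = K) -> RL f L -> K = L.
Proof.
  intros H [f1 f2].
  rewrite (surjective_pairing K), (surjective_pairing L). f_equal.
  - apply (single_limit (fun t => fst (f t)) Dpos _ _ 0); auto using adh_pos.
    apply lim_const_on. intros t Ht; rewrite H; auto.
  - apply (single_limit (fun t => snd (f t)) Dpos _ _ 0); auto using adh_pos.
    apply lim_const_on. intros t Ht; rewrite H; auto.
Qed.

Lemma RL_bounded g E M : RL g C0 -> (forall t, 0 < t < 1 -> Cnorm (E t) <= M) ->
  RL (fun t => Cmul (g t) (E t)) C0.
Proof.
  intros [g1 g2] HE.
  assert (HM : 0 <= M).
  { specialize (HE (1/2)). pose proof (Cnorm_ge0 (E (1/2))). assert (0 < 1/2 < 1) by lra. specialize (HE H0). lra. }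
  assert (K : forall eps, 0 < eps -> exists al, 0 < al /\ forall t, 0 < t < al ->
     Cnorm (Cmul (g t) (E t)) < eps).
  { intros eps He.
    destruct (g1 (eps / (2 * (M + 1)))) as [a1 [Ha1 K1]].
    { apply Rdiv_lt_0_compat; lra. }
    destruct (g2 (eps / (2 * (M + 1)))) as [a2 [Ha2 K2]].
    { apply Rdiv_lt_0_compat; lra. }
    exists (Rmin 1 (Rmin a1 a2)). split.
    { repeat apply Rmin_glb_lt; lra. }
    intros t Ht.
    pose proof (Rmin_l 1 (Rmin a1 a2)). pose proof (Rmin_r 1 (Rmin a1 a2)).
    pose proof (Rmin_l a1 a2). pose proof (Rmin_r a1 a2).
    assert (D : R_dist t 0 = t) by (unfold R_dist; rewrite Rminus_0_r, Rabs_right; lra).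
    specialize (K1 t). specialize (K2 t). simpl in K1, K2. rewrite D in K1, K2.
    unfold Dpos in *.
    assert (A1 : Rabs (fst (g t)) < eps / (2 * (M + 1))).
    { unfold R_dist in K1. rewrite Rminus_0_r in K1. apply K1; split; lra. }
    assert (A2 : Rabs (snd (g t)) < eps / (2 * (M + 1))).
    { unfold R_dist in K2. rewrite Rminus_0_r in K2. apply K2; split; lra. }
    rewrite Cnorm_mul.
    pose proof (Cnorm_le_sum (g t)). pose proof (Cnorm_ge0 (g t)).
    assert (HEt : Cnorm (E t) <= M) by (apply HE; lra).
    pose proof (Cnorm_ge0 (E t)).
    apply Rle_lt_trans with ((2 * (eps / (2 * (M + 1)))) * M).
    - apply Rmult_le_compat; auto. lra.
    - field_simplify; [|lra]. apply Rmult_lt_reg_r with (M + 1); [lra|].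
      field_simplify; lra. }
  split; simpl; intros eps He; destruct (K eps He) as [al [Hal Hk]];
    exists al; split; auto; intros t [Ht Hd]; change (Rabs (t - 0) < al) in Hd; simpl; unfold R_dist in *;
    rewrite Rminus_0_r in *; unfold Dpos in Ht; rewrite Rabs_right in Hd by lra.
  - pose proof (Cnorm_fst (Cmul (g t) (E t))). specialize (Hk t (conj Ht Hd)).
    simpl in H. lra.
  - pose proof (Cnorm_snd (Cmul (g t) (E t))). specialize (Hk t (conj Ht Hd)).
    simpl in H. lra.
Qed.

Lemma Cnorm_polar t th : 0 <= t -> Cnorm (Csub (polar t th) C0) = t.
Proof.
  intros Ht. unfold Cnorm, Cnorm2, polar, Csub, Cadd, Copp, C0; simpl.
  pose proof (sin2_cos2 th). unfold Rsqr in *.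
  replace ((t * cos th + - 0) * (t * cos th + - 0) + (t * sin th + - 0) * (t * sin th + - 0))
    with (t * t) by nra.
  apply sqrt_square; auto.
Qed.

Lemma RL_of_cont (Sbar : C -> Prop) f th :
  continuous_on Sbar f -> Sbar C0 -> (forall t, 0 < t -> Sbar (polar t th)) ->
  RL (fun t => f (polar t th)) (f C0).
Proof.
  intros Hc H0 Hs.
  assert (K : forall eps, 0 < eps -> exists al, 0 < al /\ forall t, 0 < t < al ->
     Cnorm (Csub (f (polar t th)) (f C0)) < eps).
  { intros eps He. destruct (Hc C0 H0 eps He) as [d [Hd K]].
    exists d; split; auto. intros t Ht. apply K; [apply Hs; lra | rewrite Cnorm_polar; lra]. }
  split; intros eps He; destruct (K eps He) as [al [Hal Hk]];
    exists al; split; auto; intros t [Ht Hd]; change (Rabs (t - 0) < al) in Hd; simpl; unfold R_dist in *;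
    rewrite Rminus_0_r in *; unfold Dpos in Ht; rewrite Rabs_right in Hd by lra;
    specialize (Hk t (conj Ht Hd)).
  - pose proof (Cnorm_fst (Csub (f (polar t th)) (f C0))). simpl in H. unfold Rminus. lra.
  - pose proof (Cnorm_snd (Csub (f (polar t th)) (f C0))). simpl in H. unfold Rminus. lra.
Qed.

Ltac cgen := repeat match goal with
 | |- context [m11 ?H ?z] => generalize (m11 H z); intro
 | |- context [m12 ?H ?z] => generalize (m12 H z); intro
 | |- context [m21 ?H ?z] => generalize (m21 H z); intro
 | |- context [m22 ?H ?z] => generalize (m22 H z); intro
 | |- context [bcoef ?l ?mu ?z] => generalize (bcoef l mu z); intro
 | |- context [ccoef ?o ?z] => generalize (ccoef o z); intro
 end.
Ltac cdes := repeat match goal with x : Defs.C |- context [?y] => constr_eq x y; generalize x; let w := fresh "w" in intro w; destruct w end.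
Ltac calg := cbv beta; cgen; cdes; cbv [Csub Cadd Copp Cmul Defs.C0 Defs.C1 fst snd]; f_equal; ring.

Section E.
Variables (omega l mu : R) (S : C -> Prop) (H : MatFun) (g : R -> C) (s : R) (v : C).
Hypotheses (HG : gauge_eq omega l mu S H) (HS : S (g s)) (Hg : CD g s v).
Let z := g s.
Let b := bcoef l mu z.
Let c := ccoef omega z.

Lemma E11 : CD (fun t => m11 H (g t)) s
  (Cmul (Csub (Cadd (Cmul b (m11 H z)) (Cmul c (m21 H z))) (Cmul (m11 H z) b)) v).
Proof. apply chain_rule; [exact Hg|]. apply (HG _ HS). Qed.
Lemma E12 : CD (fun t => m12 H (g t)) s
  (Cmul (Cadd (Cmul b (m12 H z)) (Cmul c (m22 H z))) v).
Proof. apply chain_rule; [exact Hg|]. apply (HG _ HS). Qed.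
Lemma E21 : CD (fun t => m21 H (g t)) s
  (Cmul (Csub (Cmul c (m11 H z)) (Cmul (m21 H z) b)) v).
Proof. apply chain_rule; [exact Hg|]. apply (HG _ HS). Qed.
Lemma E22 : CD (fun t => m22 H (g t)) s
  (Cmul (Cmul c (m12 H z)) v).
Proof. apply chain_rule; [exact Hg|]. apply (HG _ HS). Qed.
End E.

Definition G11 (h k : MatFun) z := Csub (Cmul (m22 h z) (m11 k z)) (Cmul (m12 h z) (m21 k z)).
Definition G12 (h k : MatFun) z := Csub (Cmul (m22 h z) (m12 k z)) (Cmul (m12 h z) (m22 k z)).
Definition G21 (h k : MatFun) z := Csub (Cmul (m11 h z) (m21 k z)) (Cmul (m21 h z) (m11 k z)).
Definition G22 (h k : MatFun) z := Csub (Cmul (m11 h z) (m22 k z)) (Cmul (m21 h z) (m12 k z)).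
Definition Dt (h : MatFun) z := Csub (Cmul (m11 h z) (m22 h z)) (Cmul (m12 h z) (m21 h z)).

Section G.
Variables (omega l mu : R) (S : C -> Prop) (h k : MatFun) (g : R -> C) (s : R) (v : C).
Hypotheses (Hh : gauge_eq omega l mu S h) (Hk : gauge_eq omega l mu S k) (HS : S (g s)) (Hg : CD g s v).


Lemma DG11 : CD (fun t => G11 h k (g t)) s C0.
Proof.
  unfold G11. eapply CD_val.
  - apply CD_sub; apply CD_mul.
    + exact (E22 omega l mu S h g s v Hh HS Hg).
    + exact (E11 omega l mu S k g s v Hk HS Hg).
    + exact (E12 omega l mu S h g s v Hh HS Hg).
    + exact (E21 omega l mu S k g s v Hk HS Hg).
  - calg.
Qed.
Lemma DG22 : CD (fun t => G22 h k (g t)) s C0.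
Proof.
  unfold G22. eapply CD_val.
  - apply CD_sub; apply CD_mul.
    + exact (E11 omega l mu S h g s v Hh HS Hg).
    + exact (E22 omega l mu S k g s v Hk HS Hg).
    + exact (E21 omega l mu S h g s v Hh HS Hg).
    + exact (E12 omega l mu S k g s v Hk HS Hg).
  - calg.
Qed.
Lemma DG12 : CD (fun t => G12 h k (g t)) s (Cmul (Cmul (bcoef l mu (g s)) v) (G12 h k (g s))).
Proof.
  unfold G12. eapply CD_val.
  - apply CD_sub; apply CD_mul.
    + exact (E22 omega l mu S h g s v Hh HS Hg).
    + exact (E12 omega l mu S k g s v Hk HS Hg).
    + exact (E12 omega l mu S h g s v Hh HS Hg).
    + exact (E22 omega l mu S k g s v Hk HS Hg).
  - calg.
Qed.
Lemma DG21 : CD (fun t => G21 h k (g t)) s (Copp (Cmul (Cmul (bcoef l mu (g s)) v) (G21 h k (g s)))).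
Proof.
  unfold G21. eapply CD_val.
  - apply CD_sub; apply CD_mul.
    + exact (E11 omega l mu S h g s v Hh HS Hg).
    + exact (E21 omega l mu S k g s v Hk HS Hg).
    + exact (E21 omega l mu S h g s v Hh HS Hg).
    + exact (E11 omega l mu S k g s v Hk HS Hg).
  - calg.
Qed.
Lemma DDt : CD (fun t => Dt h (g t)) s C0.
Proof.
  unfold Dt. eapply CD_val.
  - apply CD_sub; apply CD_mul.
    + exact (E11 omega l mu S h g s v Hh HS Hg).
    + exact (E22 omega l mu S h g s v Hh HS Hg).
    + exact (E12 omega l mu S h g s v Hh HS Hg).
    + exact (E21 omega l mu S h g s v Hh HS Hg).
  - calg.
Qed.
End G.

Definition Good (omega l mu al be : R) (H : MatFun) : Prop :=
  gauge_eq omega l mu (in_sector al be) H /\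
  m11 H C0 = Defs.C1 /\ m12 H C0 = C0 /\ m21 H C0 = C0 /\ m22 H C0 = Defs.C1 /\
  (forall th, al < th < be ->
     RL (fun t => m11 H (polar t th)) (m11 H C0) /\
     RL (fun t => m12 H (polar t th)) (m12 H C0) /\
     RL (fun t => m21 H (polar t th)) (m21 H C0) /\
     RL (fun t => m22 H (polar t th)) (m22 H C0)).

Lemma in_sec al be t th : 0 < t -> al < th < be -> in_sector al be (polar t th).
Proof. intros; exists t, th; auto. Qed.

Lemma ray_const (F : C -> C) th L :
  (forall t, 0 < t -> CD (fun s => F (polar s th)) t C0) ->
  RL (fun t => F (polar t th)) L -> forall t0, 0 < t0 -> F (polar t0 th) = L.
Proof.
  intros HD HL t0 Ht0.
  assert (K : forall t, 0 < t -> F (polar t th) = F (polar t0 th)).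
  { intros t Ht.
    apply (CD_const_open (fun s => F (polar s th)) 0 (t + t0 + 1) ltac:(intros x Hx; apply HD; lra) t t0);
    split; lra. }
  exact (RL_unique _ _ _ K HL).
Qed.

Lemma Cmul_Cexp_cancel X w : Cmul X (Cexp w) = C0 -> X = C0.
Proof.
  destruct X as [x1 x2], w as [a th]. unfold Cmul, Cexp, C0; simpl. intros E.
  injection E as E1 E2.
  pose proof (exp_pos a). pose proof (sin2_cos2 th). unfold Rsqr in *.
  set (e := exp a) in *. set (c := cos th) in *. set (s := sin th) in *.
  assert (A : x1 * e = c * (x1 * (e * c) - x2 * (e * s)) + s * (x1 * (e * s) + x2 * (e * c))).
  { replace x1 with (x1 * (s * s + c * c)) at 1 by (rewrite H0; ring). ring. }
  assert (B : x2 * e = - s * (x1 * (e * c) - x2 * (e * s)) + c * (x1 * (e * s) + x2 * (e * c))).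
  { replace x2 with (x2 * (s * s + c * c)) at 1 by (rewrite H0; ring). ring. }
  rewrite E1, E2 in A, B. rewrite Rmult_0_r, Rmult_0_r, Rplus_0_r in A, B.
  apply Rmult_integral in A; apply Rmult_integral in B.
  f_equal; [destruct A | destruct B]; auto; lra.
Qed.

Lemma alg_if12 (B V Fv Ev Wd : C) : Cadd (Cmul B V) Wd = C0 ->
  Cadd (Cmul (Cmul (Cmul B V) Fv) Ev) (Cmul Fv (Cmul Wd Ev)) = C0.
Proof.
  intros E.
  transitivity (Cmul (Cmul Fv Ev) (Cadd (Cmul B V) Wd)).
  - destruct B, V, Fv, Ev, Wd. cbv [Cadd Cmul Copp Csub Defs.C0 fst snd]. f_equal; ring.
  - rewrite E. destruct Fv, Ev. cbv [Cadd Cmul Copp Csub Defs.C0 fst snd]. f_equal; ring.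
Qed.

Lemma alg_if21 (B V Fv Ev Wd : C) : Csub (Cmul B V) Wd = C0 ->
  Cadd (Cmul (Copp (Cmul (Cmul B V) Fv)) Ev) (Cmul Fv (Cmul Wd Ev)) = C0.
Proof.
  intros E.
  transitivity (Copp (Cmul (Cmul Fv Ev) (Csub (Cmul B V) Wd))).
  - destruct B, V, Fv, Ev, Wd. cbv [Cadd Cmul Copp Csub Defs.C0 fst snd]. f_equal; ring.
  - rewrite E. destruct Fv, Ev. cbv [Cadd Cmul Copp Csub Defs.C0 fst snd]. f_equal; ring.
Qed.

Lemma ln_le_xm1 x : 0 < x -> ln x <= x - 1.
Proof.
  intros Hx. destruct (Req_dec (ln x) 0) as [E|E].
  - rewrite E. assert (x = 1). { rewrite <- (exp_ln x Hx), E, exp_0. auto. } lra.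
  - pose proof (exp_ineq1 (ln x) E). rewrite exp_ln in H by auto. lra.
Qed.

Lemma Cnorm_Cexp_real x : Cnorm (Cexp (x, 0)) = exp x.
Proof.
  unfold Cnorm, Cnorm2, Cexp; simpl. rewrite cos_0, sin_0.
  replace (exp x * 1 * (exp x * 1) + exp x * 0 * (exp x * 0)) with (exp x * exp x) by ring.
  apply sqrt_square. apply Rlt_le, exp_pos.
Qed.

Lemma bound_w0 l mu t : 0 <= l -> 0 < mu -> 0 < t < 1 -> w0 l mu t <= mu.
Proof.
  intros Hl Hmu Ht. unfold w0.
  assert (ln t < 0) by (rewrite <- ln_1; apply ln_increasing; lra).
  assert (0 < mu / t) by (apply Rdiv_lt_0_compat; lra).
  nra.
Qed.

Lemma bound_wpi l mu t : 0 <= l -> 0 < mu -> 0 < t < 1 ->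
  wpi l mu t <= l * (ln ((l + 1) / mu) - 1) + mu.
Proof.
  intros Hl Hmu Ht. unfold wpi.
  set (c := (l + 1) / mu). assert (Hc : 0 < c) by (apply Rdiv_lt_0_compat; lra).
  set (s := / t). assert (Hs : 0 < s) by (apply Rinv_0_lt_compat; lra).
  assert (E1 : - ln t = ln s) by (unfold s; rewrite ln_Rinv; lra).
  assert (E2 : ln (s / c) = ln s - ln c) by (unfold Rdiv; rewrite ln_mult, ln_Rinv; auto; try lra; apply Rinv_0_lt_compat; auto).
  pose proof (ln_le_xm1 (s / c) ltac:(apply Rdiv_lt_0_compat; auto)) as L.
  assert (E3 : s / c = s * mu / (l + 1)) by (unfold c; field; lra).
  assert (L2 : l * ln s <= l * ln c + mu * s - l).
  { assert (ln s <= ln c + s * mu / (l + 1) - 1) by lra.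
    apply Rle_trans with (l * (ln c + s * mu / (l + 1) - 1)); [apply Rmult_le_compat_l; auto|].
    assert (l * (s * mu / (l + 1)) <= mu * s).
    { apply Rmult_le_reg_r with (l + 1); [lra|].
      replace (l * (s * mu / (l + 1)) * (l + 1)) with (l * (s * mu)) by (field; lra).
      nra. }
    nra. }
  assert (mu / t = mu * s) by (unfold s; field; lra).
  nra.
Qed.

Section U.
Variables (omega l mu al be thp : R) (h k : MatFun).
Hypotheses (Hal : al < 0) (Hbe : 0 < be) (Hp : al < thp < be) (Hc : cos thp = -1)
  (Hs : sin thp = 0) (Hl : 0 <= l) (Hmu : 0 < mu)
  (Gh : Good omega l mu al be h) (Gk : Good omega l mu al be k).

Let S := in_sector al be.

Lemma gh : gauge_eq omega l mu S h. Proof. apply Gh. Qed.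
Lemma gk : gauge_eq omega l mu S k. Proof. apply Gk. Qed.

Lemma RLh th : al < th < be ->
     RL (fun t => m11 h (polar t th)) (m11 h C0) /\
     RL (fun t => m12 h (polar t th)) (m12 h C0) /\
     RL (fun t => m21 h (polar t th)) (m21 h C0) /\
     RL (fun t => m22 h (polar t th)) (m22 h C0).
Proof. intros; apply Gh; auto. Qed.
Lemma RLk th : al < th < be ->
     RL (fun t => m11 k (polar t th)) (m11 k C0) /\
     RL (fun t => m12 k (polar t th)) (m12 k C0) /\
     RL (fun t => m21 k (polar t th)) (m21 k C0) /\
     RL (fun t => m22 k (polar t th)) (m22 k C0).
Proof. intros; apply Gk; auto. Qed.

Ltac rlG th Hth := unfold G11, G12, G21, G22, Dt;
  destruct (RLh th Hth) as (a1 & a2 & a3 & a4);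
  destruct (RLk th Hth) as (b1 & b2 & b3 & b4);
  apply RL_sub; apply RL_mul; auto.

Lemma vals : Dt h C0 = Defs.C1 /\ G11 h k C0 = Defs.C1 /\ G22 h k C0 = Defs.C1 /\
   G12 h k C0 = C0 /\ G21 h k C0 = C0.
Proof.
  destruct Gh as (_ & e1 & e2 & e3 & e4 & _). destruct Gk as (_ & f1 & f2 & f3 & f4 & _).
  unfold G11, G12, G21, G22, Dt. rewrite e1, e2, e3, e4, f1, f2, f3, f4.
  repeat split; cbv [Csub Cadd Copp Cmul Defs.C0 Defs.C1 fst snd]; f_equal; ring.
Qed.

Lemma Dt1 r th : 0 < r -> al < th < be -> Dt h (polar r th) = Defs.C1.
Proof.
  intros Hr Hth. destruct vals as (v1 & _). rewrite <- v1.
  apply (ray_const (Dt h) th); auto.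
  - intros t Ht. apply (DDt omega l mu S h (fun s => polar s th) t (cos th, sin th)).
    + apply gh.
    + apply in_sec; auto.
    + apply CD_ray.
  - rlG th Hth.
Qed.

Lemma G11_1 r th : 0 < r -> al < th < be -> G11 h k (polar r th) = Defs.C1.
Proof.
  intros Hr Hth. destruct vals as (_ & v1 & _). rewrite <- v1.
  apply (ray_const (G11 h k) th); auto.
  - intros t Ht. apply (DG11 omega l mu S h k (fun s => polar s th) t (cos th, sin th)).
    + apply gh.
    + apply gk.
    + apply in_sec; auto.
    + apply CD_ray.
  - rlG th Hth.
Qed.

Lemma G22_1 r th : 0 < r -> al < th < be -> G22 h k (polar r th) = Defs.C1.
Proof.
  intros Hr Hth. destruct vals as (_ & _ & v1 & _). rewrite <- v1.
  apply (ray_const (G22 h k) th); auto.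
  - intros t Ht. apply (DG22 omega l mu S h k (fun s => polar s th) t (cos th, sin th)).
    + apply gh.
    + apply gk.
    + apply in_sec; auto.
    + apply CD_ray.
  - rlG th Hth.
Qed.

Lemma const_gen (psi : R -> C) L : (forall t, 0 < t -> CD psi t C0) -> RL psi L ->
  forall t0, 0 < t0 -> psi t0 = L.
Proof.
  intros HD HL t0 Ht0.
  assert (K : forall t, 0 < t -> psi t = psi t0).
  { intros t Ht.
    apply (CD_const_open psi 0 (t + t0 + 1) ltac:(intros x Hx; apply HD; lra) t t0);
    split; lra. }
  exact (RL_unique _ _ _ K HL).
Qed.

Lemma Cmul1l x : Cmul Defs.C1 x = x.
Proof. destruct x; cbv [Cmul Defs.C1 fst snd]; f_equal; ring. Qed.
Lemma Cmul1r x : Cmul x Defs.C1 = x.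
Proof. destruct x; cbv [Cmul Defs.C1 fst snd]; f_equal; ring. Qed.
Lemma Cmul0r x : Cmul x C0 = C0.
Proof. destruct x; cbv [Cmul Defs.C0 fst snd]; f_equal; ring. Qed.
Lemma Cadd0r x : Cadd x C0 = x.
Proof. destruct x; cbv [Cadd Defs.C0 fst snd]; f_equal; ring. Qed.
Lemma Cadd0l x : Cadd C0 x = x.
Proof. destruct x; cbv [Cadd Defs.C0 fst snd]; f_equal; ring. Qed.

Lemma csub_opp X Y : Csub X (Copp Y) = Cadd X Y.
Proof. destruct X, Y; cbv [Csub Cadd Copp fst snd]; f_equal; ring. Qed.

Lemma G12_ray0 t0 : 0 < t0 -> G12 h k (polar t0 0) = C0.
Proof.
  intros Ht0. assert (H0 : al < 0 < be) by lra.
  apply (Cmul_Cexp_cancel _ (w0 l mu t0, 0)).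
  apply (const_gen (fun t => Cmul (G12 h k (polar t 0)) (Cexp (w0 l mu t, 0)))); auto.
  - intros t Ht. eapply CD_val.
    + apply CD_mul.
      * apply (DG12 omega l mu S h k (fun s => polar s 0) t (cos 0, sin 0) gh gk (in_sec _ _ _ _ Ht H0) (CD_ray 0 t)).
      * apply (CD_exp (w0 l mu) (fun _ => 0) t _ _ (dw0 l mu t Ht) (dconst0 t)).
    + apply alg_if12. apply bray0; auto.
  - apply (RL_bounded _ _ (exp mu)).
    + destruct vals as (_ & _ & _ & v1 & _). rewrite <- v1. rlG 0 H0.
    + intros t Ht. rewrite Cnorm_Cexp_real. destruct (Rle_lt_or_eq_dec _ _ (bound_w0 l mu t Hl Hmu Ht)) as [E|E].
      * left; apply exp_increasing; auto.
      * rewrite E; right; auto.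
Qed.

Lemma G12_zero r th : 0 < r -> al < th < be -> G12 h k (polar r th) = C0.
Proof.
  intros Hr Hth. assert (H0 : al < 0 < be) by lra.
  apply (Cmul_Cexp_cancel _ (W1 mu r th, W2 l mu r th)).
  set (psi := fun s => Cmul (G12 h k (polar r s)) (Cexp (W1 mu r s, W2 l mu r s))).
  change (psi th = C0).
  transitivity (psi 0).
  - apply (CD_const_open psi al be); auto.
    intros x Hx. unfold psi. eapply CD_val.
    + apply CD_mul.
      * apply (DG12 omega l mu S h k (fun s => polar r s) x (- r * sin x, r * cos x) gh gk (in_sec _ _ _ _ Hr Hx) (CD_arc r x)).
      * apply (CD_exp (W1 mu r) (W2 l mu r) x _ _ (dW1 mu r x Hr) (dW2 l mu r x Hr)).
    + apply (alg_if12 _ _ _ _ (Wd l mu r x)). apply barc; auto.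
  - unfold psi. rewrite G12_ray0 by auto. destruct (Cexp _); cbv [Cmul Defs.C0 fst snd]; f_equal; ring.
Qed.

Lemma G21_raypi t0 : 0 < t0 -> G21 h k (polar t0 thp) = C0.
Proof.
  intros Ht0.
  apply (Cmul_Cexp_cancel _ (wpi l mu t0, 0)).
  apply (const_gen (fun t => Cmul (G21 h k (polar t thp)) (Cexp (wpi l mu t, 0)))); auto.
  - intros t Ht. eapply CD_val.
    + apply CD_mul.
      * apply (DG21 omega l mu S h k (fun s => polar s thp) t (cos thp, sin thp) gh gk (in_sec _ _ _ _ Ht Hp) (CD_ray thp t)).
      * apply (CD_exp (wpi l mu) (fun _ => 0) t _ _ (dwpi l mu t Ht) (dconst0 t)).
    + apply alg_if21. apply braypi; auto.
  - apply (RL_bounded _ _ (exp (l * (ln ((l + 1) / mu) - 1) + mu))).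
    + destruct vals as (_ & _ & _ & _ & v1). rewrite <- v1. rlG thp Hp.
    + intros t Ht. rewrite Cnorm_Cexp_real. destruct (Rle_lt_or_eq_dec _ _ (bound_wpi l mu t Hl Hmu Ht)) as [E|E].
      * left; apply exp_increasing; auto.
      * rewrite E; right; auto.
Qed.

Lemma G21_zero r th : 0 < r -> al < th < be -> G21 h k (polar r th) = C0.
Proof.
  intros Hr Hth.
  apply (Cmul_Cexp_cancel _ (- W1 mu r th, - W2 l mu r th)).
  set (psi := fun s => Cmul (G21 h k (polar r s)) (Cexp (- W1 mu r s, - W2 l mu r s))).
  change (psi th = C0).
  transitivity (psi thp).
  - apply (CD_const_open psi al be); auto.
    intros x Hx. unfold psi. eapply CD_val.
    + apply CD_mul.
      * apply (DG21 omega l mu S h k (fun s => polar r s) x (- r * sin x, r * cos x) gh gk (in_sec _ _ _ _ Hr Hx) (CD_arc r x)).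
      * apply (CD_exp (fun s => - W1 mu r s) (fun s => - W2 l mu r s) x _ _
           (derivable_pt_lim_opp (W1 mu r) x _ (dW1 mu r x Hr))
           (derivable_pt_lim_opp (W2 l mu r) x _ (dW2 l mu r x Hr))).
    + apply (alg_if21 _ _ _ _ (Copp (Wd l mu r x))). rewrite csub_opp. apply barc; auto.
  - unfold psi. rewrite G21_raypi by auto. destruct (Cexp _); cbv [Cmul Defs.C0 fst snd]; f_equal; ring.
Qed.

Theorem uniq r th : 0 < r -> al < th < be ->
  m11 k (polar r th) = m11 h (polar r th) /\ m12 k (polar r th) = m12 h (polar r th) /\ m21 k (polar r th) = m21 h (polar r th) /\ m22 k (polar r th) = m22 h (polar r th).
Proof.
  intros Hr Hth.
  pose proof (Dt1 r th Hr Hth) as D. pose proof (G11_1 r th Hr Hth) as A.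
  pose proof (G22_1 r th Hr Hth) as B. pose proof (G12_zero r th Hr Hth) as E.
  pose proof (G21_zero r th Hr Hth) as F.
  set (z := polar r th) in *.
  assert (I1 : Cmul (Dt h z) (m11 k z) = Cadd (Cmul (m11 h z) (G11 h k z)) (Cmul (m12 h z) (G21 h k z)))
    by (unfold Dt, G11, G21; calg).
  assert (I2 : Cmul (Dt h z) (m12 k z) = Cadd (Cmul (m11 h z) (G12 h k z)) (Cmul (m12 h z) (G22 h k z)))
    by (unfold Dt, G12, G22; calg).
  assert (I3 : Cmul (Dt h z) (m21 k z) = Cadd (Cmul (m21 h z) (G11 h k z)) (Cmul (m22 h z) (G21 h k z)))
    by (unfold Dt, G11, G21; calg).
  assert (I4 : Cmul (Dt h z) (m22 k z) = Cadd (Cmul (m21 h z) (G12 h k z)) (Cmul (m22 h z) (G22 h k z)))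
    by (unfold Dt, G12, G22; calg).
  rewrite D, A, B, E, F in *. rewrite !Cmul1l, !Cmul1r, !Cmul0r, !Cadd0r, !Cadd0l in *.
  auto.
Qed.
End U.

Lemma Cconj_inv z : Cconj (Cconj z) = z.
Proof. destruct z; unfold Cconj; simpl; f_equal; ring. Qed.
Lemma Cconj_C0 : Cconj C0 = C0.
Proof. unfold Cconj, C0; simpl; f_equal; ring. Qed.
Lemma Cconj_C1 : Cconj Defs.C1 = Defs.C1.
Proof. unfold Cconj, Defs.C1; simpl; f_equal; ring. Qed.
Lemma Copp_C0 : Copp C0 = C0.
Proof. unfold Copp, C0; simpl; f_equal; ring. Qed.
Lemma Cnorm_conj z : Cnorm (Cconj z) = Cnorm z.
Proof. destruct z; unfold Cnorm, Cnorm2, Cconj; simpl; f_equal; ring. Qed.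
Lemma Cconj_mul u w : Cconj (Cmul u w) = Cmul (Cconj u) (Cconj w).
Proof. destruct u, w; cbv [Cconj Cmul fst snd]; f_equal; ring. Qed.
Lemma Cconj_polar r th : Cconj (polar r th) = polar r (- th).
Proof. unfold Cconj, polar; simpl. rewrite cos_neg, sin_neg. f_equal; ring. Qed.

Lemma cderiv_val f z d d' : has_cderiv f z d -> d = d' -> has_cderiv f z d'.
Proof. intros H ->; auto. Qed.

Lemma cderiv_conj f z d : has_cderiv f (Cconj z) d ->
  has_cderiv (fun w => Cconj (f (Cconj w))) z (Cconj d).
Proof.
  intros H eps He. destruct (H eps He) as [delta [Hd K]].
  exists delta; split; auto. intros h Hh.
  rewrite <- Cnorm_conj in Hh. specialize (K (Cconj h) Hh).
  replace (Cconj (Cadd z h)) with (Cadd (Cconj z) (Cconj h))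
    by (destruct z, h; cbv [Cconj Cadd fst snd]; f_equal; ring).
  rewrite <- Cnorm_conj.
  replace (Cconj (Csub (Cdiv (Csub (Cconj (f (Cadd (Cconj z) (Cconj h)))) (Cconj (f (Cconj z)))) h) (Cconj d)))
    with (Csub (Cdiv (Csub (f (Cadd (Cconj z) (Cconj h))) (f (Cconj z))) (Cconj h)) d); auto.
  generalize (f (Cadd (Cconj z) (Cconj h))) (f (Cconj z)). intros [p1 p2] [q1 q2].
  destruct h as [h1 h2], d as [d1 d2].
  cbv [Cconj Csub Cadd Copp Cdiv Cmul Cinv Cnorm2 fst snd].
  replace (h1 * h1 + - h2 * - h2) with (h1 * h1 + h2 * h2) by ring.
  f_equal; unfold Rdiv; ring.
Qed.

Lemma cderiv_opp f z d : has_cderiv f z d -> has_cderiv (fun w => Copp (f w)) z (Copp d).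
Proof.
  intros H eps He. destruct (H eps He) as [delta [Hd K]].
  exists delta; split; auto. intros h Hh. specialize (K h Hh).
  replace (Csub (Cdiv (Csub (Copp (f (Cadd z h))) (Copp (f z))) h) (Copp d))
    with (Copp (Csub (Cdiv (Csub (f (Cadd z h)) (f z)) h) d)).
  - rewrite Cnorm_opp; auto.
  - generalize (f (Cadd z h)) (f z). intros [p1 p2] [q1 q2].
    destruct h as [h1 h2], d as [d1 d2].
    cbv [Cconj Csub Cadd Copp Cdiv Cmul Cinv Cnorm2 fst snd]. f_equal; unfold Rdiv; ring.
Qed.

Lemma bcoef_conj l mu z : z <> C0 -> bcoef l mu z = Cconj (bcoef l mu (Cconj z)).
Proof.
  intros Hz. rewrite !bcoef_inv; auto.
  2:{ destruct z as [x y]; unfold Cconj, C0 in *; simpl; intro E; injection E as E1 E2.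
      apply Hz; f_equal; lra. }
  destruct z as [x y].
  cbv [Cconj Csub Cadd Copp Cdiv Cmul Cinv Cnorm2 RtoC fst snd].
  replace (x * x + - y * - y) with (x * x + y * y) by ring.
  f_equal; unfold Rdiv; ring.
Qed.

Lemma Cconj_Cinv w : Cconj (Cinv w) = Cinv (Cconj w).
Proof.
  destruct w as [x y]. cbv [Cconj Cinv Cnorm2 fst snd].
  replace (x * x + - y * - y) with (x * x + y * y) by ring. f_equal; unfold Rdiv; ring.
Qed.
Lemma Cinv_opp w : Cinv (Copp w) = Copp (Cinv w).
Proof.
  destruct w as [x y]. cbv [Copp Cinv Cnorm2 fst snd].
  replace (- x * - x + - y * - y) with (x * x + y * y) by ring. f_equal; unfold Rdiv; ring.
Qed.
Lemma Copp_Copp w : Copp (Copp w) = w.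
Proof. destruct w; cbv [Copp fst snd]; f_equal; ring. Qed.

Lemma ccoef_conj omega z : ccoef omega z = Copp (Cconj (ccoef omega (Cconj z))).
Proof.
  unfold ccoef. rewrite Cconj_Cinv, Cconj_mul, Cconj_inv.
  replace (Cmul (Cconj (Cmul (RtoC 2) (Cmul Ci (RtoC omega)))) z)
    with (Copp (Cmul (Cmul (RtoC 2) (Cmul Ci (RtoC omega))) z)).
  - rewrite Cinv_opp, Copp_Copp; auto.
  - destruct z; cbv [Cconj Copp Cmul RtoC Ci fst snd]; f_equal; ring.
Qed.

Definition Kof (H : MatFun) : MatFun :=
  {| m11 := fun z => Cconj (m11 H (Cconj z));
     m12 := fun z => Copp (Cconj (m12 H (Cconj z)));
     m21 := fun z => Copp (Cconj (m21 H (Cconj z)));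
     m22 := fun z => Cconj (m22 H (Cconj z)) |}.

Lemma conj_sector a b z : in_sector (-b) (-a) z -> in_sector a b (Cconj z) /\ z <> C0.
Proof.
  intros (r & th & Hr & Hth & ->). split.
  - rewrite Cconj_polar. exists r, (- th); repeat split; auto; lra.
  - apply polar_ne0; auto.
Qed.

Ltac calg2 := cbv beta; cgen; cdes; cbv [Cconj Csub Cadd Copp Cmul Defs.C0 Defs.C1 fst snd]; f_equal; ring.

Lemma gauge_K omega l mu a b H : gauge_eq omega l mu (in_sector a b) H ->
  gauge_eq omega l mu (in_sector (-b) (-a)) (Kof H).
Proof.
  intros HG z Hz. destruct (conj_sector a b z Hz) as [Hs Hz0].
  destruct (HG _ Hs) as (d11 & d12 & d21 & d22).
  cbn [m11 m12 m21 m22 Kof].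
  rewrite (bcoef_conj l mu z Hz0), (ccoef_conj omega z).
  repeat split.
  - eapply cderiv_val; [apply (cderiv_conj (m11 H)); exact d11|]. calg2.
  - eapply cderiv_val; [apply (cderiv_opp (fun w => Cconj (m12 H (Cconj w)))); apply (cderiv_conj (m12 H)); exact d12|]. calg2.
  - eapply cderiv_val; [apply (cderiv_opp (fun w => Cconj (m21 H (Cconj w)))); apply (cderiv_conj (m21 H)); exact d21|]. calg2.
  - eapply cderiv_val; [apply (cderiv_conj (m22 H)); exact d22|]. calg2.
Qed.

Lemma RL_ext f g L : (forall t, 0 < t -> f t = g t) -> RL f L -> RL g L.
Proof.
  intros E [H1 H2]; split; intros eps He.
  - destruct (H1 eps He) as [al [Hal K]]. exists al; split; auto.
    intros x [Dx Hx]. rewrite <- E by auto. apply K; split; auto.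
  - destruct (H2 eps He) as [al [Hal K]]. exists al; split; auto.
    intros x [Dx Hx]. rewrite <- E by auto. apply K; split; auto.
Qed.

Lemma RL_smooth al be f th : al < th < be ->
  smooth_on_closure (in_sector al be) (in_sector_cl al be) f ->
  RL (fun t => f (polar t th)) (f C0).
Proof.
  intros Hth (D & HD0 & _ & Hc).
  assert (C0cl : in_sector_cl al be C0).
  { exists 0, th; repeat split; try lra. unfold polar, C0; f_equal; ring. }
  assert (Pcl : forall t, 0 < t -> in_sector_cl al be (polar t th)).
  { intros t Ht; exists t, th; repeat split; auto; lra. }
  rewrite <- (HD0 _ C0cl).
  apply (RL_ext (fun t => D O (polar t th))).
  - intros t Ht; apply HD0; auto.
  - apply (RL_of_cont (in_sector_cl al be)); auto.
Qed.

Lemma Good_of_norm omega l mu al be H :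
  is_normalizing_H omega l mu (in_sector al be) (in_sector_cl al be) H ->
  Good omega l mu al be H.
Proof.
  intros (_ & _ & _ & _ & _ & s11 & s12 & s21 & s22 & v11 & v12 & v21 & v22 & G).
  split; [exact G|]. do 4 (split; [auto|]).
  intros th Hth. split; [|split; [|split]]; apply (RL_smooth al be); auto.
Qed.

Lemma Good_K omega l mu a b H : Good omega l mu a b H -> Good omega l mu (-b) (-a) (Kof H).
Proof.
  intros (G & v11 & v12 & v21 & v22 & Hr).
  split; [apply gauge_K; auto|].
  cbn [m11 m12 m21 m22 Kof]. rewrite Cconj_C0, v11, v12, v21, v22, Cconj_C0, Cconj_C1, Copp_C0.
  do 4 (split; [auto|]).
  intros th Hth. assert (Hth' : a < - th < b) by lra.
  destruct (Hr _ Hth') as (r11 & r12 & r21 & r22).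
  rewrite v11 in r11; rewrite v12 in r12; rewrite v21 in r21; rewrite v22 in r22.
  split; [|split; [|split]].
  - rewrite <- Cconj_C1. apply (RL_ext (fun t => Cconj (m11 H (polar t (- th))))).
    { intros t Ht; rewrite Cconj_polar; auto. } apply RL_conj; auto.
  - rewrite <- Copp_C0, <- Cconj_C0. apply (RL_ext (fun t => Copp (Cconj (m12 H (polar t (- th)))))).
    { intros t Ht; rewrite Cconj_polar; auto. } apply RL_opp, RL_conj; auto.
  - rewrite <- Copp_C0, <- Cconj_C0. apply (RL_ext (fun t => Copp (Cconj (m21 H (polar t (- th)))))).
    { intros t Ht; rewrite Cconj_polar; auto. } apply RL_opp, RL_conj; auto.
  - rewrite <- Cconj_C1. apply (RL_ext (fun t => Cconj (m22 H (polar t (- th))))).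
    { intros t Ht; rewrite Cconj_polar; auto. } apply RL_conj; auto.
Qed.

Lemma trig_per_Z x k : cos (x + 2 * IZR k * PI) = cos x /\ sin (x + 2 * IZR k * PI) = sin x.
Proof.
  destruct (Z_le_gt_dec 0 k) as [Hk|Hk].
  - rewrite <- (Z2Nat.id k Hk). rewrite <- INR_IZR_INZ. split; [apply cos_period|apply sin_period].
  - assert (Hk' : (0 <= - k)%Z) by lia.
    set (n := Z.to_nat (- k)).
    assert (E : IZR k = - INR n).
    { unfold n. rewrite INR_IZR_INZ, Z2Nat.id by auto. rewrite opp_IZR. ring. }
    rewrite E.
    pose proof (cos_period (x + 2 * - INR n * PI) n) as C1.
    pose proof (sin_period (x + 2 * - INR n * PI) n) as S1.
    replace (x + 2 * - INR n * PI + 2 * INR n * PI) with x in C1, S1 by ring.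
    split; auto.
Qed.

Lemma cos_2PI_m x : cos (2 * PI - x) = cos x.
Proof. rewrite cos_minus, cos_2PI, sin_2PI. ring. Qed.
Lemma sin_2PI_m x : sin (2 * PI - x) = - sin x.
Proof. rewrite sin_minus, cos_2PI, sin_2PI. ring. Qed.
Lemma cos_m_2PI x : cos (x - 2 * PI) = cos x.
Proof. rewrite cos_minus, cos_2PI, sin_2PI. ring. Qed.
Lemma sin_m_2PI x : sin (x - 2 * PI) = sin x.
Proof. rewrite sin_minus, cos_2PI, sin_2PI. ring. Qed.

Lemma polar_2PI_m r th : polar r (2 * PI - th) = Cconj (polar r th).
Proof. unfold polar, Cconj; simpl. rewrite cos_2PI_m, sin_2PI_m. f_equal; ring. Qed.
Lemma polar_m_2PI r th : polar r th = polar r (th - 2 * PI).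
Proof. unfold polar. rewrite cos_m_2PI, sin_m_2PI. auto. Qed.

Lemma Cconj_exp w : Cconj (Cexp w) = Cexp (Cconj w).
Proof. destruct w; cbv [Cconj Cexp fst snd]. rewrite cos_neg, sin_neg. f_equal; ring. Qed.


Lemma Cexp_per x y k : Cexp (x, y + 2 * IZR k * PI) = Cexp (x, y).
Proof. unfold Cexp; simpl. destruct (trig_per_Z y k) as [A B]. rewrite A, B; auto. Qed.


Lemma Fconj l mu r th : (exists k : Z, l = IZR k) ->
  Cconj (Fentry l mu r (2 * PI - th)) = Fentry l mu r th.
Proof.
  intros [k Hk]. unfold Fentry. rewrite Cconj_mul, !Cconj_exp.
  f_equal.
  - replace (Cconj (Cmul (RtoC (- l)) (ln r, 2 * PI - th)))
      with (- l * ln r - 0 * th, (- l * th + 0 * ln r) + 2 * IZR k * PI).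
    + rewrite Cexp_per. auto.
    + cbv [Cconj Cmul RtoC fst snd]. rewrite <- Hk. f_equal; ring.
  - f_equal. rewrite polar_2PI_m.
    replace (Cinv (Cconj (polar r th))) with (Cconj (Cinv (polar r th)))
      by (rewrite Cconj_Cinv; auto).
    generalize (Cinv (polar r th)) (polar r th). intros [u1 u2] [z1 z2].
    cbv [Cconj Cmul Csub Cadd Copp RtoC fst snd]. f_equal; ring.
Qed.

Theorem mainTheorem4 (omega l mu a b : R) (Hp Hm : MatFun) :
  0 < omega -> 0 <= l -> 0 < mu ->
  - PI / 2 < a < 0 -> PI < b < 3 * PI / 2 ->
  is_normalizing_H omega l mu (in_sector a b) (in_sector_cl a b) Hp ->
  is_normalizing_H omega l mu (in_sector (- b) (- a)) (in_sector_cl (- b) (- a)) Hm ->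
  (forall z, in_sector (- b) (- a) z -> Jval (col2W Hp (Cconj z)) = col2W Hm z) /\
  (forall z, in_sector a b z -> Jval (col2W Hm (Cconj z)) = col2W Hp z) /\
  ((exists k : Z, l = IZR k) ->
     (forall r theta, 0 < r -> 2 * PI - b < theta < 2 * PI - a ->
        Jval (col1W Hp l mu r (2 * PI - theta)) = vopp (col1W Hm l mu r theta)) /\
     (forall r theta, 0 < r -> a < theta < b ->
        Jval (col1W Hm l mu r (2 * PI - theta)) = vopp (col1W Hp l mu r theta))).
Proof.
  intros Hom Hl Hmu Ha Hb Np Nm.
  pose proof PI_RGT_0 as HPI.
  set (K := Kof Hp).
  assert (GK : Good omega l mu (- b) (- a) K) by (apply Good_K, Good_of_norm; auto).
  assert (GM : Good omega l mu (- b) (- a) Hm) by (apply Good_of_norm; auto).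
  assert (U : forall r th, 0 < r -> - b < th < - a ->
    m11 Hm (polar r th) = m11 K (polar r th) /\ m12 Hm (polar r th) = m12 K (polar r th) /\
    m21 Hm (polar r th) = m21 K (polar r th) /\ m22 Hm (polar r th) = m22 K (polar r th)).
  { intros r th Hr Hth. apply (uniq omega l mu (- b) (- a) (- PI) K Hm); auto; try lra.
    - rewrite cos_neg, cos_PI; auto.
    - rewrite sin_neg, sin_PI; ring. }
  split; [|split].
  - intros z (r & th & Hr & Hth & ->).
    destruct (U r th Hr Hth) as (e11 & e12 & e21 & e22).
    unfold Jval, col2W; simpl. rewrite e12, e22. reflexivity.
  - intros z (r & th & Hr & Hth & ->).
    rewrite Cconj_polar.
    destruct (U r (- th) Hr ltac:(lra)) as (e11 & e12 & e21 & e22).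
    unfold Jval, col2W; simpl. rewrite e12, e22. unfold K; cbn [Kof m12 m22].
    rewrite <- Cconj_polar, Cconj_inv.
    generalize (m12 Hp (polar r th)) (m22 Hp (polar r th)). intros [x1 x2] [y1 y2].
    cbv [Cconj Copp fst snd]; f_equal; f_equal; ring.
  - intros Hk. split.
    + intros r th Hr Hth.
      destruct (U r (th - 2 * PI) Hr ltac:(lra)) as (e11 & e12 & e21 & e22).
      unfold col1W, Jval, vopp; cbv zeta; simpl.
      rewrite (polar_m_2PI r th) at 1 2.
      rewrite e11, e21. unfold K; cbn [Kof m11 m21].
      rewrite <- (polar_m_2PI r th), <- polar_2PI_m, <- (Fconj l mu r th Hk).
      generalize (m11 Hp (polar r (2 * PI - th))) (m21 Hp (polar r (2 * PI - th)))
        (Fentry l mu r (2 * PI - th)). intros [x1 x2] [y1 y2] [f1 f2].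
      cbv [Cconj Copp Cmul fst snd]; f_equal; f_equal; ring.
    + intros r th Hr Hth.
      assert (P : polar r (2 * PI - th) = polar r (- th))
        by (rewrite polar_2PI_m, Cconj_polar; auto).
      destruct (U r (- th) Hr ltac:(lra)) as (e11 & e12 & e21 & e22).
      unfold col1W, Jval, vopp; cbv zeta; simpl.
      rewrite P, e11, e21. unfold K; cbn [Kof m11 m21].
      rewrite Cconj_polar, Ropp_involutive, <- (Fconj l mu r th Hk).
      generalize (m11 Hp (polar r th)) (m21 Hp (polar r th))
        (Fentry l mu r (2 * PI - th)). intros [x1 x2] [y1 y2] [f1 f2].
      cbv [Cconj Copp Cmul fst snd]; f_equal; f_equal; ring.
Qed.
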